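(* For every $\bar g\in W$, $$T\!\left(\frac{\delta\bar g}{\delta u}\right)=\sum_{a,b\in\mathbb{Z}}\frac{\partial\bar g}{\partial p^a_b}\,e^{-i(ay+bx)}.$$
   Context: Let $u_{k_1,k_2}$ ($k_1,k_2\ge0$), $p^a_b$ ($a,b\in\mathbb{Z}$), $\epsilon$, $e^{\pm ix}$, $e^{\pm iy}$ be formal variables. Let $T:\mathbb{C}[[u_{\star,\star},\epsilon]]\to\mathbb{C}[[p^\star_\star,e^{\pm ix},e^{\pm iy},\epsilon]]$ be the ($\epsilon$-linear, multiplicative, continuous) map with $u_{k_1,k_2}\mapsto\partial_x^{k_1}\partial_y^{k_2}\big(\sum_{a,b}p^a_b e^{i(ay+bx)}\big)$, where $\partial_x,\partial_y$ act on $e^{i(ay+bx)}$ as derivatives in $x,y$. For $G$ in the target, $\bar G\in\mathbb{C}[[p^\star_\star,\epsilon]]$ denotes its coefficient of $e^{i0}$. Set $T_0(f)=\overline{T(f)}$ and $W=\mathrm{image}(T_0)$. Define derivations on $\mathbb{C}[[u_{\star,\star},\epsilon]]$ by $\partial_x f=\sum_{k_1,k_2\ge0}u_{k_1+1,k_2}\frac{\partial f}{\partial u_{k_1,k_2}}$ and $\partial_y f=\sum_{k_1,k_2\ge0}u_{k_1,k_2+1}\frac{\partial f}{\partial u_{k_1,k_2}}$. For $\bar g\in W$ choose $f$ with $T_0(f)=\bar g$ and define the variational derivative $\frac{\delta\bar g}{\delta u}=\sum_{k_1,k_2\ge0}(-1)^{k_1+k_2}\partial_x^{k_1}\partial_y^{k_2}\frac{\partial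 f}{\partial u_{k_1,k_2}}$ (independent of the choice of $f$). *)

(* Defs.v *)
From HB Require Import structures.
From mathcomp Require Import all_boot all_order all_algebra.
From mathcomp Require Import finmap multiset.
From mathcomp Require Import boolp classical_sets functions cardinality fsbigop.

Set Implicit Arguments.
Unset Strict Implicit.
Unset Printing Implicit Defensive.

Import Order.TTheory GRing.Theory Num.Theory.
Local Open Scope ring_scope.
Local Open Scope classical_set_scope.

(* A formal series is represented by its coefficient function.               *)
(* Source ring C[[u_{*,*}, eps]] : u-monomials are finite multisets of pairs *)
(*   (k1,k2) (the variable u_{k1,k2}); an index is (eps-exponent, monomial). *)
(* Target ring C[[p^*_*, e^{+-ix}, e^{+-iy}, eps]] : p-monomials are finite  *)
(*   multisets of pairs (a,b) (the variable p^a_b); an index is              *)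
(*   (eps-exponent, p-monomial, (nx, ny)) standing for                       *)
(*   eps^d p^P e^{i(nx x + ny y)}.                                          *)
(* Ring C[[p^*_*, eps]] (the "bar" ring): index (eps-exponent, p-monomial).  *)

Definition umon := multiset (nat * nat)%type.
Definition pmon := multiset (int * int)%type.
Definition sidx := (nat * umon)%type.
Definition tidx := (nat * pmon * (int * int))%type.
Definition bidx := (nat * pmon)%type.

Definition fsum (C : numClosedFieldType) (K : choiceType) (I : Type)
  (F : K -> I -> C) : I -> C :=
  fun i => \sum_(k \in [set: K]) F k i.

Definition sdu (C : numClosedFieldType) (k : nat * nat) (f : sidx -> C)
  : sidx -> C :=
  fun s => ((s.2 k).+1)%:R * f (s.1, msetD (msetn 1 k) s.2).

Definition smulu (C : numClosedFieldType) (j : nat * nat) (h : sidx -> C)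
  : sidx -> C :=
  fun s => if j \in s.2 then h (s.1, msetB s.2 (msetn 1 j)) else 0.

(* d_x f = sum_{k1,k2} u_{k1+1,k2} df/du_{k1,k2},
   d_y f = sum_{k1,k2} u_{k1,k2+1} df/du_{k1,k2} *)
Definition sdx (C : numClosedFieldType) (f : sidx -> C) : sidx -> C :=
  fsum (fun k : nat * nat => smulu (k.1.+1, k.2) (sdu k f)).
Definition sdy (C : numClosedFieldType) (f : sidx -> C) : sidx -> C :=
  fsum (fun k : nat * nat => smulu (k.1, k.2.+1) (sdu k f)).

Definition varder (C : numClosedFieldType) (f : sidx -> C) : sidx -> C :=
  fsum (fun k : nat * nat => fun s =>
    (-1) ^+ (k.1 + k.2) * iter k.1 (@sdx C) (iter k.2 (@sdy C) (sdu k f)) s).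

Definition tadd (t1 t2 : tidx) : tidx :=
  ((t1.1.1 + t2.1.1)%N, msetD t1.1.2 t2.1.2,
   (t1.2.1 + t2.2.1, t1.2.2 + t2.2.2)).

Definition tmono (C : numClosedFieldType) (t0 : tidx) : tidx -> C :=
  fun t => (t == t0)%:R.

Definition tmul (C : numClosedFieldType) (G H : tidx -> C) : tidx -> C :=
  fun t => \sum_(x \in [set x : tidx * tidx | tadd x.1 x.2 = t]) G x.1 * H x.2.

Definition tone (C : numClosedFieldType) : tidx -> C :=
  tmono C (0%N, mset0, (0, 0)).

(* T(u_{k1,k2}) = d_x^k1 d_y^k2 sum_{a,b} p^a_b e^{i(ay+bx)}
               = sum_{a,b} (i b)^k1 (i a)^k2 p^a_b e^{i(ay+bx)} *)
Definition Tu (C : numClosedFieldType) (k : nat * nat) : tidx -> C :=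
  fsum (fun ab : int * int => fun t =>
    ('i * ab.2%:~R) ^+ k.1 * ('i * ab.1%:~R) ^+ k.2
    * tmono C (0%N, (msetn 1 ab), (ab.2, ab.1)) t).

Definition Tmon (C : numClosedFieldType) (m : umon) : tidx -> C :=
  \big[@tmul C/tone C]_(k <- enum_mset m) Tu C k.

(* T(f) = sum_{d,m} f_{d,m} eps^d T(u^m)   (eps-linear, multiplicative,
   continuous extension) *)
Definition Tmap (C : numClosedFieldType) (f : sidx -> C) : tidx -> C :=
  fsum (fun s : sidx => fun t =>
    f s * tmul (tmono C (s.1, mset0, (0, 0))) (Tmon C s.2) t).

Definition tbar (C : numClosedFieldType) (G : tidx -> C) : bidx -> C :=
  fun b => G (b.1, b.2, (0, 0)).

Definition T0 (C : numClosedFieldType) (f : sidx -> C) : bidx -> C :=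
  tbar (Tmap f).

(* Domain of T: f such that for every eps-degree d and polynomial degree n
   only finitely many u-monomials of degree n carry a nonzero coefficient
   (this is exactly what makes all the sums defining T(f) finite; it holds
   e.g. for all differential polynomials). *)
Definition Tdom (C : numClosedFieldType) (f : sidx -> C) : Prop :=
  forall d n : nat, finite_set [set m : umon | f (d, m) != 0 /\ size (enum_mset m) = n].

Definition W (C : numClosedFieldType) : set (bidx -> C) :=
  [set g | exists f, Tdom f /\ T0 f = g].

Definition bdp (C : numClosedFieldType) (ab : int * int) (g : bidx -> C)
  : bidx -> C :=
  fun b => ((b.2 ab).+1)%:R * g (b.1, msetD (msetn 1 ab) b.2).

Definition blift (C : numClosedFieldType) (g : bidx -> C) : tidx -> C :=
  fun t => if t.2 == (0, 0) then g t.1 else 0.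

Definition rhs (C : numClosedFieldType) (g : bidx -> C) : tidx -> C :=
  fsum (fun ab : int * int =>
    tmul (blift (bdp ab g)) (tmono C (0%N, mset0, (- ab.2, - ab.1)))).

(* Main.v *)
Require Import Defs.
From HB Require Import structures.
From mathcomp Require Import all_boot all_order all_algebra.
From mathcomp Require Import finmap multiset.
From mathcomp Require Import boolp classical_sets functions cardinality fsbigop.
From mathcomp Require Import zify ring.

Set Implicit Arguments.
Unset Strict Implicit.
Unset Printing Implicit Defensive.

Import Order.TTheory GRing.Theory Num.Theory.
Local Open Scope ring_scope.
Local Open Scope classical_set_scope.

Section Gen.
Variable C : numClosedFieldType.

Lemma fsum_sup (K : choiceType) (F : K -> C) (r : seq K) :
  (forall k, F k != 0 -> k \in r) ->
  \sum_(k \in [set: K]) F k = \sum_(k <- undup r) F k.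
Proof.
move=> Hr; rewrite (fsbigTE [fset x | x in r]%fset F).
  apply: perm_big; apply: uniq_perm; rewrite ?undup_uniq //.
  by move=> x; rewrite mem_undup; rewrite inE.
move=> i; rewrite inE /= => Hi; apply/eqP; apply: contraNT Hi => /Hr.
by [].
Qed.

Lemma sum_cover (K : choiceType) (F : K -> C) (r1 r2 : seq K) :
  (forall k, F k != 0 -> k \in r1) -> (forall k, F k != 0 -> k \in r2) ->
  \sum_(k <- undup r1) F k = \sum_(k <- undup r2) F k.
Proof. by move=> H1 H2; rewrite -(fsum_sup H1) -(fsum_sup H2). Qed.

Lemma fsum_neq0 (K : choiceType) (F : K -> C) :
  \sum_(k \in [set: K]) F k != 0 -> exists k, F k != 0.
Proof.
move=> H; case: (pselect (exists k, F k != 0)) => // /forallNP HF.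
by move: H; rewrite fsbig1 ?eqxx // => i _; have := HF i; case: (F i =P 0).
Qed.

Lemma sum_neq0 (K : eqType) (F : K -> C) (r : seq K) :
  \sum_(k <- r) F k != 0 -> exists2 k, k \in r & F k != 0.
Proof.
move=> H; case: (pselect (exists2 k, k \in r & F k != 0)) => // HF.
move: H; rewrite big1_seq ?eqxx // => i /= Hi; case: (F i =P 0) => // /eqP HFi.
by case: HF; exists i.
Qed.

Lemma fsum_exchange (I J : choiceType) (F : I -> J -> C) (r : seq (I * J)) :
  (forall i j, F i j != 0 -> (i, j) \in r) ->
  \sum_(i \in [set: I]) \sum_(j \in [set: J]) F i j =
  \sum_(j \in [set: J]) \sum_(i \in [set: I]) F i j.
Proof.
move=> Hr.
have HA i j : F i j != 0 -> i \in map fst r by move/Hr => H; apply/mapP; exists (i, j).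
have HB i j : F i j != 0 -> j \in map snd r by move/Hr => H; apply/mapP; exists (i, j).
transitivity (\sum_(i <- undup (map fst r)) \sum_(j <- undup (map snd r)) F i j).
  rewrite (fsum_sup (r := map fst r)); last first.
    by move=> i /fsum_neq0 [j /HA].
  by apply: eq_bigr => i _; apply: fsum_sup => j /HB.
rewrite exchange_big /=.
rewrite (fsum_sup (r := map snd r)); last first.
  by move=> j /fsum_neq0 [i /HB].
by apply: eq_bigr => j _; rewrite (fsum_sup (r := map fst r)) // => i /HA.
Qed.

Lemma fsum_reindex (I J : choiceType) (h : I -> J) (F : I -> C) (G : J -> C) :
  (forall i, F i != 0 -> G (h i) = F i) ->
  (forall i i', F i != 0 -> F i' != 0 -> h i = h i' -> i = i') ->
  (forall j, G j != 0 -> exists i, F i != 0 /\ h i = j) ->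
  \sum_(j \in [set: J]) G j = \sum_(i \in [set: I]) F i.
Proof.
move=> HG Hinj Hsurj.
rewrite fsbig_supp [RHS]fsbig_supp.
rewrite (reindex_fsbig h (setT `&` F @^-1` [set~ 0]) (setT `&` G @^-1` [set~ 0])).
  apply: eq_fsbigr => i; rewrite inE => -[_ /= /eqP Fi]; exact: HG.
split.
- move=> i [_ /= /eqP Fi]; split => //=; rewrite HG //; exact/eqP.
- move=> i i'; rewrite !inE => -[_ /= /eqP Fi] [_ /= /eqP Fi'] E; exact: Hinj.
- move=> j [_ /= /eqP Gj]; have [i [Fi <-]] := Hsurj j Gj.
  by exists i => //; split => //=; apply/eqP.
Qed.

Lemma finite_sub_seq (T : eqType) (P : set T) (r : seq T) :
  (forall x, P x -> x \in r) -> finite_set P.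
Proof. by move=> H; apply: (sub_finite_set (B := [set` r])) => // x /H. Qed.

End Gen.
Section MS.
Variable K : choiceType.
Implicit Types (a b x : K) (m : multiset K).

Lemma mDE a m x : (msetD (msetn 1 a) m) x = ((x == a) + m x)%N.
Proof. by rewrite msetE2 msetnE; case: (x == a). Qed.

Lemma mBE a m x : (msetB m (msetn 1 a)) x = (m x - (x == a))%N.
Proof. by rewrite msetE2 msetnE; case: (x == a). Qed.

Lemma mDB a m : a \in m -> msetD (msetn 1 a) (msetB m (msetn 1 a)) = m.
Proof.
rewrite in_mset => Ha; apply/msetP => x; rewrite mDE mBE.
by case: (eqVneq x a) => [->|_] /=; lia.
Qed.

Lemma mBD a m : msetB (msetD (msetn 1 a) m) (msetn 1 a) = m.
Proof. by apply/msetP => x; rewrite mBE mDE; case: (x == a) => /=; lia. Qed.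

Lemma mD_inj a m m' : msetD (msetn 1 a) m = msetD (msetn 1 a) m' -> m = m'.
Proof. by move=> E; rewrite -(mBD a m) E mBD. Qed.

Lemma in_mD1 a m : a \in msetD (msetn 1 a) m.
Proof. by rewrite in_mset mDE eqxx. Qed.

Lemma in_mD a m x : (x \in msetD (msetn 1 a) m) = (x == a) || (x \in m).
Proof. by rewrite !in_mset mDE; case: (x == a). Qed.

Lemma in_mDr a m x : x \in m -> x \in msetD (msetn 1 a) m.
Proof. by rewrite in_mD => ->; rewrite orbT. Qed.

Lemma mset1_inj a b : msetn 1 a = msetn 1 b -> a = b.
Proof.
move=> E; have := msetnxx 1 a; rewrite E msetnE.
by case: (eqVneq a b).
Qed.

Lemma perm_mD a m : perm_eq (enum_mset (msetD (msetn 1 a) m)) (a :: enum_mset m).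
Proof.
have -> : msetD (msetn 1 a) m = seq_mset (a :: enum_mset m).
  by rewrite mset_cons seq_mset_id.
exact: perm_eq_seq_mset.
Qed.

Lemma size_mD a m : size (enum_mset (msetD (msetn 1 a) m)) = (size (enum_mset m)).+1.
Proof. by rewrite (perm_size (perm_mD a m)). Qed.

Lemma size_mB a m : a \in m -> size (enum_mset m) = (size (enum_mset (msetB m (msetn 1 a)))).+1.
Proof. by move=> Ha; rewrite -(size_mD a) mDB. Qed.

Lemma mBC a b m : msetB (msetB m (msetn 1 a)) (msetn 1 b) = msetB (msetB m (msetn 1 b)) (msetn 1 a).
Proof. by apply/msetP => x; rewrite !mBE; lia. Qed.

Lemma mDC a b m : msetD (msetn 1 a) (msetD (msetn 1 b) m) = msetD (msetn 1 b) (msetD (msetn 1 a) m).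
Proof. by apply/msetP => x; rewrite !mDE; lia. Qed.

Lemma mDB_comm a b m : b \in m ->
  msetB (msetD (msetn 1 a) m) (msetn 1 b) = msetD (msetn 1 a) (msetB m (msetn 1 b)).
Proof.
rewrite in_mset => Hb; apply/msetP => x; rewrite !(mBE, mDE).
by case: (eqVneq x b) => [->|_]; case: (_ == a) => /=; lia.
Qed.

Lemma in_mB a b m : a \in m -> b \in m ->
  (b \in msetB m (msetn 1 a)) = (a \in msetB m (msetn 1 b)).
Proof.
rewrite !in_mset !mBE => Ha Hb.
case: (eqVneq b a) => [->|nba]; first by [].
by rewrite !subn0 Ha Hb.
Qed.

Lemma notin_mB a b m : b != a -> (b \in msetB m (msetn 1 a)) = (b \in m).
Proof. by rewrite !in_mset mBE => /negPf ->; rewrite subn0. Qed.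

Lemma mB_notin a m : a \notin m -> msetB m (msetn 1 a) = m.
Proof.
rewrite in_mset -leqNgt leqn0 => /eqP Ha; apply/msetP => x; rewrite mBE.
by case: (eqVneq x a) => [->|]; rewrite ?Ha //= subn0.
Qed.

Lemma mset_ind (P : multiset K -> Prop) :
  P mset0 -> (forall a m, P m -> P (msetD (msetn 1 a) m)) -> forall m, P m.
Proof.
move=> P0 PS m; have [n] := ubnP (size (enum_mset m)); elim: n m => // n IH m.
case: (mset_0Vmem m) => [->|[a Ha]] // Hs.
rewrite -(mDB Ha); apply: PS; apply: IH.
by move: Hs; rewrite (size_mB Ha).
Qed.

End MS.

Section T.
Variable C : numClosedFieldType.

Definition w (k : nat * nat) (ab : int * int) : C :=
  ('i * ab.2%:~R) ^+ k.1 * ('i * ab.1%:~R) ^+ k.2.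

Lemma tmonoE (t0 t : tidx) : tmono C t0 t = if t == t0 then 1 else 0.
Proof. by rewrite /tmono; case: (t == t0). Qed.

Lemma fsum_setE (K : choiceType) (A : set K) (F : K -> C) (r : seq K) :
  uniq r -> (forall x, x \in r -> A x) -> (forall x, A x -> F x != 0 -> x \in r) ->
  \sum_(x \in A) F x = \sum_(x <- r) F x.
Proof.
move=> ur rA HF; rewrite (fsbigE r) //.
- rewrite big_seq_cond [RHS]big_seq_cond; apply: eq_bigl => x.
  case: (boolP (x \in r)) => //= xr; apply/mem_set; exact: rA.
- move=> i Ai ir; apply/eqP; case: (boolP (F i == 0)) => // /(HF i Ai).
  by rewrite (negPf ir).
Qed.

Lemma tmul_monoL (e d : nat) (P : pmon) (n1 n2 : int) (G : tidx -> C) :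
  tmul (tmono C (e, mset0, (0, 0))) G (d, P, (n1, n2)) =
  if (e <= d)%N then G ((d - e)%N, P, (n1, n2)) else 0.
Proof.
rewrite /tmul; case: leqP => Hed.
- rewrite (fsum_setE (r := [:: ((e, mset0, (0, 0)), ((d - e)%N, P, (n1, n2)))])) //.
  + by rewrite big_seq1 tmonoE eqxx mul1r.
  + move=> x; rewrite inE => /eqP -> /=; rewrite /tadd /= mset0D !add0r.
    by congr (_, _, _); lia.
  + move=> [[[e1 P1] [a1 b1]] [[e2 P2] [a2 b2]]] /=; rewrite /tadd /= => -[E1 E2 E3 E4].
    rewrite tmonoE; case: ifP => [/eqP [? ? ? ?]|_]; last by rewrite mul0r eqxx.
    subst; rewrite mset0D !add0r => _.
    by rewrite inE addKn.
- rewrite (fsum_setE (r := [::])) ?big_nil //.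
  move=> [[[e1 P1] [a1 b1]] [[e2 P2] [a2 b2]]] /=; rewrite /tadd /= => -[E1 E2 E3 E4].
  rewrite tmonoE; case: ifP => [/eqP [E5 _ _ _]|_]; last by rewrite mul0r eqxx.
  by exfalso; lia.
Qed.

Lemma tmul_monoR (v1 v2 : int) (d : nat) (P : pmon) (n1 n2 : int) (G : tidx -> C) :
  tmul G (tmono C (0%N, mset0, (v1, v2))) (d, P, (n1, n2)) =
  G (d, P, (n1 - v1, n2 - v2)).
Proof.
rewrite /tmul.
rewrite (fsum_setE (r := [:: ((d, P, (n1 - v1, n2 - v2)), (0%N, mset0, (v1, v2)))])) //.
+ by rewrite big_seq1 tmonoE eqxx mulr1.
+ move=> x; rewrite inE => /eqP -> /=; rewrite /tadd /= msetD0 !subrK.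
  by congr (_, _, _); lia.
+ move=> [[[e1 P1] [a1 b1]] [[e2 P2] [a2 b2]]] /=; rewrite /tadd /= => -[E1 E2 E3 E4].
  rewrite tmonoE; case: ifP => [/eqP [? ? ? ?]|_]; last by rewrite mulr0 eqxx.
  subst; rewrite msetD0 !addrK addn0 => _.
  by rewrite inE.
Qed.

Lemma Tu_at (k : nat * nat) (ab : int * int) :
  Tu C k (0%N, msetn 1 ab, (ab.2, ab.1)) = w k ab.
Proof.
rewrite /Tu /fsum (fsum_sup (r := [:: ab])) /= ?big_seq1 ?tmonoE ?eqxx ?mulr1 //.
move=> cd; rewrite tmonoE; case: ifP => [/eqP E|_].
  by case: E => /mset1_inj E _ _ _; rewrite E inE.
by rewrite mulr0 eqxx.
Qed.

Lemma Tu_supp (k : nat * nat) (x : tidx) :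
  Tu C k x != 0 -> exists ab : int * int, x = (0%N, msetn 1 ab, (ab.2, ab.1)).
Proof.
rewrite /Tu /fsum => /fsum_neq0 [ab]; rewrite tmonoE.
by case: ifP => [/eqP ->|_]; [exists ab | rewrite mulr0 eqxx].
Qed.

Lemma tmulTu (k : nat * nat) (G : tidx -> C) (d : nat) (P : pmon) (n1 n2 : int) :
  tmul (Tu C k) G (d, P, (n1, n2)) =
  \sum_(ab <- undup (enum_mset P))
     w k ab * G (d, msetB P (msetn 1 ab), (n1 - ab.2, n2 - ab.1)).
Proof.
pose phi (ab : int * int) : tidx * tidx :=
  ((0%N, msetn 1 ab, (ab.2, ab.1)), (d, msetB P (msetn 1 ab), (n1 - ab.2, n2 - ab.1))).
rewrite /tmul (fsum_setE (r := map phi (undup (enum_mset P)))).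
- by rewrite big_map; apply: eq_bigr => ab _; rewrite /phi /= Tu_at.
- by rewrite map_inj_uniq ?undup_uniq // => ab cd [/mset1_inj].
- move=> x /mapP [ab]; rewrite mem_undup => Hab -> /=.
  rewrite /tadd /= mDB // add0n !(addrC ab.2) !(addrC ab.1) !subrK.
  by [].
- move=> [x1 x2] /= Hx; rewrite mulf_eq0 negb_or => /andP [/Tu_supp [ab E0] _].
  subst x1; move: Hx; case: x2 => [[e2 P2] [a2 b2]]; rewrite /tadd /= => -[E1 E2 E3 E4].
  subst; apply/mapP; exists ab; first by rewrite mem_undup in_mD1.
  by rewrite /phi mBD add0n !(addrC ab.2) !(addrC ab.1) !addrK.
Qed.


Lemma mB_sub (K : choiceType) (a x : K) (m : multiset K) :
  x \in msetB m (msetn 1 a) -> x \in m.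
Proof. by rewrite !in_mset mBE; lia. Qed.

Lemma cond_sym (K : choiceType) (a b : K) (m : multiset K) :
  (b \in msetB m (msetn 1 a)) && (a \in m) = (a \in msetB m (msetn 1 b)) && (b \in m).
Proof.
case: (boolP (a \in m)) => Ha; case: (boolP (b \in m)) => Hb; rewrite ?andbT ?andbF //.
- exact: in_mB.
- by apply/negbTE; exact: (contra (@mB_sub _ a b m) Hb).
- by apply/esym/negbTE; exact: (contra (@mB_sub _ b a m) Ha).
Qed.

Lemma sum_guard (K : choiceType) (m : multiset K) (r : seq K) (F : K -> C) :
  (forall x, x \in m -> x \in r) ->
  \sum_(x <- undup (enum_mset m)) F x =
  \sum_(x <- undup r) (if x \in m then F x else 0).
Proof.
move=> Hr; rewrite -(sum_cover (r1 := enum_mset m)).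
- by apply: eq_big_seq => x; rewrite mem_undup => ->.
- by move=> x /=; case: ifP => // _; rewrite eqxx.
- by move=> x /=; case: ifP => [/Hr H _|_]; [exact: H | rewrite eqxx].
Qed.

Definition TS (s : seq (nat * nat)) : tidx -> C := \big[@tmul C/tone C]_(k <- s) Tu C k.

Lemma TS_cons k s : TS (k :: s) = tmul (Tu C k) (TS s).
Proof. by rewrite /TS big_cons. Qed.

Lemma TS_nil : TS [::] = tone C.
Proof. by rewrite /TS big_nil. Qed.

Lemma TS_swap k l s : TS (k :: l :: s) = TS (l :: k :: s).
Proof.
apply: funext => -[[d P] [n1 n2]]; rewrite !TS_cons !tmulTu.
set U := undup (enum_mset P).
have E (k1 k2 : nat * nat) :
  \sum_(ab <- U) w k1 ab * tmul (Tu C k2) (TS s)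
     (d, msetB P (msetn 1 ab), (n1 - ab.2, n2 - ab.1)) =
  \sum_(ab <- U) \sum_(cd <- U)
     (if (cd \in msetB P (msetn 1 ab)) && (ab \in P) then
        w k1 ab * w k2 cd * TS s (d, msetB (msetB P (msetn 1 ab)) (msetn 1 cd),
          (n1 - ab.2 - cd.2, n2 - ab.1 - cd.1)) else 0).
  apply: eq_big_seq => ab; rewrite mem_undup => Hab.
  rewrite tmulTu (sum_guard (r := enum_mset P)); last by move=> x; apply: mB_sub.
  rewrite mulr_sumr; apply: eq_bigr => cd _; rewrite Hab andbT.
  by case: ifP => _; [rewrite mulrA | rewrite mulr0].
rewrite !E [in RHS]exchange_big /=.
apply: eq_bigr => ab _; apply: eq_bigr => cd _.
rewrite cond_sym mBC; case: ifP => // _; rewrite [w k ab * _]mulrC.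
by rewrite (addrAC n1) (addrAC n2).
Qed.

Lemma TS_mid s1 k s2 : TS (s1 ++ k :: s2) = TS (k :: s1 ++ s2).
Proof.
elim: s1 => [//|a s1 IH] /=.
by rewrite TS_cons IH -TS_cons TS_swap.
Qed.

Lemma TS_perm s s' : perm_eq s s' -> TS s = TS s'.
Proof.
elim: s s' => [|k s IH] s' Hp.
  by have := perm_size Hp; case: s' Hp.
have Hk : k \in s' by rewrite -(perm_mem Hp) mem_head.
case/splitPr: Hk Hp => s1 s2 Hp.
have H2 : perm_eq (s1 ++ k :: s2) (k :: s1 ++ s2) by rewrite -cat1s perm_catCA.
rewrite TS_mid !TS_cons (IH (s1 ++ s2)) //.
by rewrite -(perm_cons k) (perm_trans Hp H2).
Qed.

Lemma TmonE m : Tmon C m = TS (enum_mset m).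
Proof. by []. Qed.

Lemma Tmon_mD a m : Tmon C (msetD (msetn 1 a) m) = tmul (Tu C a) (Tmon C m).
Proof. by rewrite !TmonE (TS_perm (perm_mD a m)) TS_cons. Qed.

Lemma Tmon0 : Tmon C mset0 = tone C.
Proof. by rewrite TmonE enum_mset0 TS_nil. Qed.

Lemma TS_eps s e P n1 n2 : e != 0%N -> TS s (e, P, (n1, n2)) = 0.
Proof.
move=> He; elim: s P n1 n2 => [|k s IH] P n1 n2.
  rewrite TS_nil /tone tmonoE; case: ifP => // /eqP [E _ _ _].
  by rewrite E in He.
by rewrite TS_cons tmulTu big1 // => ab _; rewrite IH mulr0.
Qed.

Lemma Tmon_eps m e P n1 n2 : e != 0%N -> Tmon C m (e, P, (n1, n2)) = 0.
Proof. by rewrite TmonE; apply: TS_eps. Qed.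

Lemma TS_size s P n1 n2 : TS s (0%N, P, (n1, n2)) != 0 ->
  size s = size (enum_mset P).
Proof.
elim: s P n1 n2 => [|k s IH] P n1 n2.
  rewrite TS_nil /tone tmonoE; case: ifP => [/eqP/(congr1 (fun t => t.1.2)) /= -> _|]; last by rewrite eqxx.
  by rewrite enum_mset0.
rewrite TS_cons tmulTu => /sum_neq0 [ab]; rewrite mem_undup => Hab.
rewrite mulf_eq0 negb_or => /andP [_ /IH E].
by rewrite /= E (size_mB Hab).
Qed.

Definition N (m : umon) (P : pmon) (n1 n2 : int) : C := Tmon C m (0%N, P, (n1, n2)).

Lemma N_size m P n1 n2 : N m P n1 n2 != 0 -> size (enum_mset m) = size (enum_mset P).
Proof. exact: TS_size. Qed.

Lemma N_rec a m P n1 n2 :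
  N (msetD (msetn 1 a) m) P n1 n2 =
  \sum_(ab <- undup (enum_mset P)) w a ab * N m (msetB P (msetn 1 ab)) (n1 - ab.2) (n2 - ab.1).
Proof. by rewrite /N Tmon_mD tmulTu. Qed.

Lemma N0_supp P n1 n2 : N mset0 P n1 n2 != 0 -> [/\ P = mset0, n1 = 0 & n2 = 0].
Proof.
rewrite /N Tmon0 /tone tmonoE; case: ifP => [/eqP [-> -> ->] //|_].
by rewrite eqxx.
Qed.


Lemma natr_supp (K : choiceType) (m : multiset K) (k : K) (X : C) :
  (m k)%:R * X != 0 -> k \in m.
Proof. by rewrite in_mset lt0n; apply: contraNN => /eqP ->; rewrite mul0r. Qed.

Lemma sum_delta (K : eqType) (r : seq K) (a : K) (G : K -> C) :
  uniq r -> a \in r -> \sum_(k <- r) (k == a)%:R * G k = G a.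
Proof.
move=> ur ar; rewrite (bigD1_seq a) //= eqxx mul1r big1 ?addr0 //.
by move=> k /negPf ->; rewrite mul0r.
Qed.

Lemma sum_mD (a : nat * nat) (m : umon) (G : nat * nat -> umon -> C) :
  \sum_(k <- undup (enum_mset (msetD (msetn 1 a) m)))
     ((msetD (msetn 1 a) m) k)%:R * G k (msetB (msetD (msetn 1 a) m) (msetn 1 k)) =
  G a m + \sum_(k <- undup (enum_mset m))
     (m k)%:R * G k (msetD (msetn 1 a) (msetB m (msetn 1 k))).
Proof.
rewrite (sum_cover (r2 := a :: enum_mset m)); last first.
  by move=> k /natr_supp; rewrite in_mD in_cons.
  by move=> k /natr_supp.
rewrite (eq_bigr (fun k => (k == a)%:R * G k (msetB (msetD (msetn 1 a) m) (msetn 1 k))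
   + (m k)%:R * G k (msetB (msetD (msetn 1 a) m) (msetn 1 k)))); last first.
  by move=> k _; rewrite mDE natrD mulrDl.
rewrite big_split sum_delta ?undup_uniq ?mem_undup ?mem_head //.
rewrite mBD.
congr (_ + _).
rewrite (eq_bigr (fun k => (m k)%:R * G k (msetD (msetn 1 a) (msetB m (msetn 1 k))))); last first.
  move=> k _; case: (boolP (k \in m)) => Hk; first by rewrite mDB_comm.
  by move: Hk; rewrite in_mset lt0n negbK => /eqP ->; rewrite !mul0r.
apply: sum_cover; first by move=> k /natr_supp; rewrite in_cons => ->; rewrite orbT.
by move=> k /natr_supp.
Qed.

Definition sdgT (e : nat * nat -> nat * nat) (phi : umon -> C) (m : umon) : C :=
  \sum_(k <- undup (enum_mset m)) (m k)%:R * phi (msetD (msetn 1 (e k)) (msetB m (msetn 1 k))).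

Lemma D_N (e : nat * nat -> nat * nat) (pi : int * int -> int)
  (hw : forall k ab, w (e k) ab = 'i * (pi (ab.2, ab.1))%:~R * w k ab)
  (hpi0 : pi (0, 0) = 0)
  (hpiB : forall x y : int * int, pi (x.1 - y.1, x.2 - y.2) = pi x - pi y) :
  forall m P n1 n2, sdgT e (fun m' => N m' P n1 n2) m = 'i * (pi (n1, n2))%:~R * N m P n1 n2.
Proof.
elim/mset_ind => [|a m IH] P n1 n2.
  rewrite /sdgT enum_mset0 big_nil.
  case: (boolP (N mset0 P n1 n2 == 0)) => [/eqP -> | /N0_supp [_ -> ->]].
    by rewrite mulr0.
  by rewrite hpi0 mulr0 mul0r.
rewrite /sdgT (sum_mD a m (fun k X => N (msetD (msetn 1 (e k)) X) P n1 n2)) /=.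
under eq_bigr => k _ do rewrite mDC N_rec mulr_sumr.
rewrite exchange_big (N_rec (e a) m P n1 n2) (N_rec a m P n1 n2) mulr_sumr -big_split.
apply: eq_bigr => ab _.
have -> : \sum_(i <- undup (enum_mset m)) (m i)%:R *
    (w a ab * N (msetD (msetn 1 (e i)) (msetB m (msetn 1 i))) (msetB P (msetn 1 ab)) (n1 - ab.2) (n2 - ab.1))
  = w a ab * sdgT e (fun m' => N m' (msetB P (msetn 1 ab)) (n1 - ab.2) (n2 - ab.1)) m.
  by rewrite /sdgT mulr_sumr; apply: eq_bigr => k _; rewrite mulrCA.
rewrite IH hw.
have := hpiB (n1, n2) (ab.2, ab.1); rewrite /= => ->.
rewrite intrB; set X := N _ _ _ _; set y := (pi (ab.2, ab.1))%:~R.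
by ring.
Qed.


Lemma CR (c : int * int) : forall (m : umon) (P : pmon) (v1 v2 : int),
  ((P c).+1)%:R * N m (msetD (msetn 1 c) P) v1 v2 =
  \sum_(k <- undup (enum_mset m))
     (m k)%:R * (w k c * N (msetB m (msetn 1 k)) P (v1 - c.2) (v2 - c.1)).
Proof.
elim/mset_ind => [|a m IH] P v1 v2.
  rewrite enum_mset0 big_nil.
  case: (boolP (N mset0 (msetD (msetn 1 c) P) v1 v2 == 0)) => [/eqP ->|/N0_supp [E _ _]].
    by rewrite mulr0.
  by have := in_mD1 c P; rewrite E in_mset mset0E.
have HR : \sum_(k <- undup (enum_mset (msetD (msetn 1 a) m)))
     ((msetD (msetn 1 a) m) k)%:R * (w k c * N (msetB (msetD (msetn 1 a) m) (msetn 1 k)) P (v1 - c.2) (v2 - c.1))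
   = w a c * N m P (v1 - c.2) (v2 - c.1) +
     \sum_(ab <- undup (enum_mset P)) w a ab *
        ((((msetB P (msetn 1 ab)) c).+1)%:R *
          N m (msetD (msetn 1 c) (msetB P (msetn 1 ab))) (v1 - ab.2) (v2 - ab.1)).
  rewrite (sum_mD a m (fun k X => w k c * N X P (v1 - c.2) (v2 - c.1))) /=; congr (_ + _).
  under eq_bigr => k _ do rewrite N_rec !mulr_sumr.
  rewrite exchange_big; apply: eq_bigr => ab _; rewrite IH mulr_sumr.
  apply: eq_bigr => k _; rewrite (addrAC v1) (addrAC v2).
  by ring.
rewrite HR (N_rec a m (msetD (msetn 1 c) P) v1 v2).
rewrite (sum_guard (r := c :: enum_mset P)); last first.
  by move=> x; rewrite in_mD in_cons.
rewrite [in RHS](sum_guard (r := c :: enum_mset P)); last first.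
  by move=> x Hx; rewrite in_cons Hx orbT.
have Uc : c \in undup (c :: enum_mset P) by rewrite mem_undup mem_head.
rewrite (bigD1_seq c) ?undup_uniq // [in RHS](bigD1_seq c) ?undup_uniq //=.
rewrite in_mD1 mBD mulrDr addrA; congr (_ + _).
  case: (boolP (c \in P)) => Hc.
    have Hc0 : (0 < P c)%N by rewrite -in_mset.
    rewrite mDB // mBE eqxx subn1 prednK // mulrS.
    by ring.
  by move/mset_eq0P: Hc => ->; rewrite mul1r addr0.
rewrite mulr_sumr; apply: eq_bigr => i Hi.
rewrite in_mD (negPf Hi) /=; case: ifP => Hi2; last by rewrite mulr0.
rewrite mDB_comm // mBE [c == i]eq_sym (negPf Hi) subn0.
by rewrite mulrCA.
Qed.


Definition Pair (h : sidx -> C) (d : nat) (phi : umon -> C) : C :=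
  \sum_(m \in [set: umon]) h (d, m) * phi m.
Definition FinAt (h : sidx -> C) (d n : nat) :=
  finite_set [set m : umon | h (d, m) != 0 /\ size (enum_mset m) = n].
Definition szsupp (phi : umon -> C) (n : nat) :=
  forall m, phi m != 0 -> size (enum_mset m) = n.
Definition sdgen (e : nat * nat -> nat * nat) (h : sidx -> C) : sidx -> C :=
  fsum (fun k : nat * nat => smulu (e k) (sdu k h)).

Lemma sdxE : @sdx C = sdgen (fun k => (k.1.+1, k.2)). Proof. by []. Qed.
Lemma sdyE : @sdy C = sdgen (fun k => (k.1, k.2.+1)). Proof. by []. Qed.

Lemma term_supp (e : nat * nat -> nat * nat) (h : sidx -> C) (k : nat * nat) (d : nat) (m : umon) : smulu (e k) (sdu k h) (d, m) != 0 ->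
  exists m'', [/\ h (d, m'') != 0, k \in m'',
    m = msetD (msetn 1 (e k)) (msetB m'' (msetn 1 k)) &
    size (enum_mset m'') = size (enum_mset m)].
Proof.
rewrite /smulu /=; case: ifP => He; last by rewrite eqxx.
rewrite /sdu /= mulf_eq0 negb_or => /andP [_ Hh].
exists (msetD (msetn 1 k) (msetB m (msetn 1 (e k)))); split => //.
- exact: in_mD1.
- by rewrite mBD mDB.
- by rewrite size_mD (size_mB He).
Qed.

Lemma sdgen_supp (e : nat * nat -> nat * nat) (h : sidx -> C) (d : nat) (m : umon) : sdgen e h (d, m) != 0 ->
  exists k m'', [/\ h (d, m'') != 0, k \in m'',
    m = msetD (msetn 1 (e k)) (msetB m'' (msetn 1 k)) &
    size (enum_mset m'') = size (enum_mset m)].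
Proof. by rewrite /sdgen /fsum => /fsum_neq0 [k /term_supp [m'' H]]; exists k, m''. Qed.

Lemma iter_supp (e : nat * nat -> nat * nat) (a : nat) (h : sidx -> C) (d : nat) (m : umon) : iter a (sdgen e) h (d, m) != 0 ->
  exists m1, h (d, m1) != 0 /\ size (enum_mset m1) = size (enum_mset m).
Proof.
elim: a m => [|a IH] m; first by move=> H; exists m.
rewrite iterS => /sdgen_supp [k [m'' [/IH [m1 [H1 H2]] _ _ H3]]].
by exists m1; rewrite H2 H3.
Qed.

Lemma inS (T : eqType) (A : set T) (S : seq T) x : A = [set` S] -> A x -> x \in S.
Proof. by move=> -> . Qed.

Lemma FinAt_sdgen (e : nat * nat -> nat * nat) (h : sidx -> C) (d n : nat) : FinAt h d n -> FinAt (sdgen e h) d n.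
Proof.
move/finite_seqP => [S HS].
apply: (finite_sub_seq (r := flatten [seq [seq msetD (msetn 1 (e k)) (msetB m'' (msetn 1 k))
    | k <- enum_mset m''] | m'' <- S])).
move=> m [/sdgen_supp [k [m'' [H1 H2 H3 H4]]] Hs].
apply/flattenP; exists [seq msetD (msetn 1 (e k)) (msetB m'' (msetn 1 k)) | k <- enum_mset m''].
  apply/mapP; exists m'' => //; apply: (inS HS); split => //; by rewrite H4.
by apply/mapP; exists k.
Qed.

Lemma FinAt_sdu (k : nat * nat) (h : sidx -> C) (d n : nat) : FinAt h d n.+1 -> FinAt (sdu k h) d n.
Proof.
move/finite_seqP => [S HS].
apply: (finite_sub_seq (r := [seq msetB m' (msetn 1 k) | m' <- S])).
move=> m [Hm Hs]; apply/mapP; exists (msetD (msetn 1 k) m); last by rewrite mBD.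
apply: (inS HS); split; last by rewrite size_mD Hs.
by move: Hm; rewrite /sdu mulf_eq0 negb_or => /andP [].
Qed.

Lemma FinAt_iter (e : nat * nat -> nat * nat) (a : nat) (h : sidx -> C) (d n : nat) : FinAt h d n -> FinAt (iter a (sdgen e) h) d n.
Proof. by move=> H; elim: a => [//|a IH]; rewrite iterS; apply: FinAt_sdgen. Qed.


Lemma Tr_sdu (k : nat * nat) (h : sidx -> C) (d : nat) (phi : umon -> C) :
  Pair (sdu k h) d phi =
  Pair h d (fun m' => (m' k)%:R * phi (msetB m' (msetn 1 k))).
Proof.
rewrite /Pair.
have E m : h (d, msetD (msetn 1 k) m) *
    (((msetD (msetn 1 k) m) k)%:R * phi (msetB (msetD (msetn 1 k) m) (msetn 1 k)))
  = sdu k h (d, m) * phi m.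
  by rewrite /sdu /= mDE eqxx mBD add1n mulrCA mulrA.
symmetry; apply: (fsum_reindex (h := fun m => msetD (msetn 1 k) m)).
- by move=> m _; rewrite E.
- by move=> m m' _ _ /mD_inj.
- move=> m' Hm'; have Hk : k \in (m' : umon).
    by move: Hm'; rewrite mulf_eq0 negb_or => /andP [_ /natr_supp].
  exists (msetB m' (msetn 1 k)); rewrite mDB //; split => //.
  by rewrite -E mDB.
Qed.

Lemma Tr_smulu (j : nat * nat) (h : sidx -> C) (d : nat) (phi : umon -> C) :
  Pair (smulu j h) d phi = Pair h d (fun m => phi (msetD (msetn 1 j) m)).
Proof.
rewrite /Pair.
have E m : smulu j h (d, msetD (msetn 1 j) m) * phi (msetD (msetn 1 j) m)
  = h (d, m) * phi (msetD (msetn 1 j) m).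
  by rewrite /smulu /= in_mD1 mBD.
apply: (fsum_reindex (h := fun m => msetD (msetn 1 j) m)).
- by move=> m _; rewrite E.
- by move=> m m' _ _ /mD_inj.
- move=> m Hm; have Hj : j \in (m : umon).
    by move: Hm; rewrite /smulu /=; case: ifP => // _; rewrite mul0r eqxx.
  exists (msetB m (msetn 1 j)); rewrite mDB //; split => //.
  by have := E (msetB m (msetn 1 j)); rewrite mDB // => <-.
Qed.

Lemma Tr_sdgen (e : nat * nat -> nat * nat) (h : sidx -> C) (d n : nat) (phi : umon -> C) :
  FinAt h d n -> szsupp phi n ->
  Pair (sdgen e h) d phi = Pair h d (sdgT e phi).
Proof.
move=> /finite_seqP [S HS] Hphi.
have Hsz k m'' : k \in m'' ->
    size (enum_mset (msetD (msetn 1 (e k)) (msetB m'' (msetn 1 k)))) = size (enum_mset m'').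
  by move=> Hk; rewrite size_mD (size_mB Hk).
rewrite /Pair /sdgen /fsum.
under eq_fsbigr => m _ do rewrite mulr_fsuml.
rewrite (fsum_exchange (r := flatten [seq [seq (msetD (msetn 1 (e k)) (msetB m'' (msetn 1 k)), k)
    | k <- enum_mset m''] | m'' <- S])); last first.
  move=> m k; rewrite mulf_eq0 negb_or => /andP [/term_supp [m'' [H1 H2 H3 H4]] /Hphi Hs].
  apply/flattenP; exists [seq (msetD (msetn 1 (e k)) (msetB m'' (msetn 1 k)), k) | k <- enum_mset m''].
    apply/mapP; exists m'' => //; apply: (inS HS); split => //; by rewrite H4.
  by apply/mapP; exists k => //; rewrite H3.
transitivity (\sum_(k \in [set: nat * nat]) Pair (smulu (e k) (sdu k h)) d phi) => //.
under eq_fsbigr => k _ do rewrite Tr_smulu Tr_sdu.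
rewrite /Pair (fsum_exchange (r := flatten [seq [seq (k, m'') | k <- enum_mset m''] | m'' <- S])).
  apply: eq_fsbigr => m'' _; rewrite -mulr_fsumr /sdgT.
  congr (_ * _); apply: fsum_sup => k /=.
  exact: natr_supp.
move=> k m''; rewrite mulf_eq0 negb_or => /andP [H1].
move=> /[dup] /natr_supp Hk; rewrite mulf_eq0 negb_or => /andP [_ /Hphi].
rewrite Hsz // => Hs.
apply/flattenP; exists [seq (k, m'') | k <- enum_mset m''].
  by apply/mapP; exists m'' => //; apply: (inS HS).
by apply/mapP; exists k.
Qed.

Lemma Pair_scale (h : sidx -> C) (d : nat) (phi : umon -> C) (c : C) :
  Pair h d (fun m => c * phi m) = c * Pair h d phi.
Proof. by rewrite /Pair mulr_fsumr; apply: eq_fsbigr => m _; rewrite mulrCA. Qed.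

Lemma Tr_iter (e : nat * nat -> nat * nat) (a : nat) (h : sidx -> C) (d n : nat)
   (c : C) (phi : umon -> C) :
  FinAt h d n -> szsupp phi n -> (forall m, sdgT e phi m = c * phi m) ->
  Pair (iter a (sdgen e) h) d phi = c ^+ a * Pair h d phi.
Proof.
move=> Hh Hphi Hc; elim: a => [|a IH]; first by rewrite expr0 mul1r.
rewrite iterS (Tr_sdgen _ (@FinAt_iter e a h d n Hh) Hphi).
have -> : sdgT e phi = (fun m => c * phi m) by apply: funext.
by rewrite Pair_scale IH exprS mulrA.
Qed.


Lemma Tmap_Pair (h : sidx -> C) (d : nat) (P : pmon) (n1 n2 : int) :
  Tmap h (d, P, (n1, n2)) = Pair h d (fun m => N m P n1 n2).
Proof.
rewrite /Tmap /fsum /Pair.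
apply: (fsum_reindex (h := fun m : umon => (d, m))).
- by move=> m _ /=; rewrite tmul_monoL leqnn subnn.
- by move=> m m' _ _ [].
- move=> [d' m] /=; rewrite tmul_monoL; case: leqP => Hd; last by rewrite mulr0 eqxx.
  case: (eqVneq (d - d')%N 0%N) => [E|E]; last by rewrite Tmon_eps // mulr0 eqxx.
  have Ed : d' = d by lia.
  by subst; rewrite subnn => H; exists m.
Qed.

Lemma rhsE (g : bidx -> C) (d : nat) (P : pmon) (n1 n2 : int) :
  rhs g (d, P, (n1, n2)) = bdp (- n2, - n1) g (d, P).
Proof.
rewrite /rhs /fsum (fsum_sup (r := [:: (- n2, - n1)])).
  by rewrite /= big_seq1 tmul_monoR /blift /= !opprK !subrr.
move=> [a b]; rewrite tmul_monoR /blift /=; case: ifP => [/eqP [E1 E2] _|_]; last by rewrite eqxx.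
by rewrite mem_seq1; apply/eqP; congr pair; lia.
Qed.

Lemma exprN' (x : C) (n : nat) : (- x) ^+ n = (-1) ^+ n * x ^+ n.
Proof. by rewrite -[- x]mulN1r exprMn. Qed.

Lemma Dx m P n1 n2 :
  sdgT (fun k => (k.1.+1, k.2)) (fun m' => N m' P n1 n2) m = 'i * n1%:~R * N m P n1 n2.
Proof.
apply: (D_N (pi := fst)) => //.
by move=> k ab; rewrite /w /= exprS !mulrA.
Qed.

Lemma Dy m P n1 n2 :
  sdgT (fun k => (k.1, k.2.+1)) (fun m' => N m' P n1 n2) m = 'i * n2%:~R * N m P n1 n2.
Proof.
apply: (D_N (pi := snd)) => //.
by move=> k ab; rewrite /w /= exprS mulrCA.
Qed.

Lemma coefE (k : nat * nat) (n1 n2 : int) :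
  (-1) ^+ (k.1 + k.2) * (('i * n1%:~R) ^+ k.1 * ('i * n2%:~R) ^+ k.2) = w k (- n2, - n1).
Proof. by rewrite /w /= !intrN !mulrN (exprN' ('i * n1%:~R)) (exprN' ('i * n2%:~R)) exprD mulrACA. Qed.

End T.

Theorem lemma5p1 (C : numClosedFieldType) (g : bidx -> C) :
  g \in (@W C) ->
  forall f : sidx -> C, Tdom f -> T0 f = g ->
  Tmap (varder f) = rhs g.
Proof.
move=> _ f Hf <-; apply: funext => -[[d P] [n1 n2]].
rewrite rhsE Tmap_Pair /bdp /= /T0 /tbar /= Tmap_Pair.
set n := size (enum_mset P).
have HN : szsupp (fun m => N C m P n1 n2) n by move=> m /N_size.
rewrite -Pair_scale.
have -> : (fun m => ((P (- n2, - n1)).+1)%:R * N C m (msetD (msetn 1 (- n2, - n1)) P) 0 0) =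
   (fun m => \sum_(k <- undup (enum_mset m))
      (m k)%:R * (w C k (- n2, - n1) * N C (msetB m (msetn 1 k)) P n1 n2)).
  by apply: funext => m; rewrite CR /= !sub0r !opprK.
have FI : forall k, FinAt (iter k.2 (sdgen (fun k => (k.1, k.2.+1))) (sdu k f)) d n.
  by move=> k; apply: FinAt_iter; apply: FinAt_sdu; apply: Hf.
pose Aset k := [set m : umon | iter k.1 (sdgen (fun k => (k.1.+1, k.2)))
    (iter k.2 (sdgen (fun k => (k.1, k.2.+1))) (sdu k f)) (d, m) != 0 /\ size (enum_mset m) = n].
have FA k : finite_set (Aset k) by apply: FinAt_iter.
have /finite_seqP [S' HS'] := Hf d n.+1.
rewrite /Pair /varder /fsum sdxE sdyE.
under eq_fsbigr => m _ do rewrite mulr_fsuml.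
rewrite (fsum_exchange (r := flatten [seq [seq (m, k) | m <- fset_set (Aset k)]
    | k <- flatten (map (@enum_mset _) S')])); last first.
  move=> m k; rewrite mulf_eq0 negb_or => /andP [Ht /N_size Hs].
  move: Ht; rewrite mulf_eq0 negb_or => /andP [_ HI].
  have [m1 [H1 H1s]] := iter_supp HI.
  have [m2 [H2 H2s]] := iter_supp H1.
  have Hf2 : f (d, msetD (msetn 1 k) m2) != 0.
    by move: H2; rewrite /sdu mulf_eq0 negb_or => /andP [].
  have HS2 : msetD (msetn 1 k) m2 \in S'.
    by apply: (inS HS'); split => //; rewrite size_mD H2s H1s Hs.
  apply/flattenP; exists [seq (m, k) | m <- fset_set (Aset k)].
    apply/mapP; exists k => //; apply/flattenP; exists (enum_mset (msetD (msetn 1 k) m2)).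
      by apply/mapP; exists (msetD (msetn 1 k) m2).
    exact: in_mD1.
  apply/mapP; exists m => //; rewrite in_fset_set //; apply/mem_set; split => //.
transitivity (\sum_(k \in [set: nat * nat]) \sum_(m' \in [set: umon]) f (d, m') *
   (((-1) ^+ (k.1 + k.2) * (('i * n1%:~R) ^+ k.1 * ('i * n2%:~R) ^+ k.2)) *
    ((m' k)%:R * N C (msetB m' (msetn 1 k)) P n1 n2))).
  apply: eq_fsbigr => k _.
  transitivity ((-1) ^+ (k.1 + k.2) * Pair (iter k.1 (sdgen (fun k => (k.1.+1, k.2)))
     (iter k.2 (sdgen (fun k => (k.1, k.2.+1))) (sdu k f))) d (fun m => N C m P n1 n2)).
    by rewrite /Pair mulr_fsumr; apply: eq_fsbigr => m _; rewrite mulrA.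
  rewrite (Tr_iter (phi := fun m => N C m P n1 n2) (c := 'i * n1%:~R) _ (FI k) HN (fun m => @Dx C m P n1 n2)).
  rewrite (Tr_iter (phi := fun m => N C m P n1 n2) (c := 'i * n2%:~R) _ (FinAt_sdu _ (Hf d n.+1)) HN (fun m => @Dy C m P n1 n2)).
  rewrite Tr_sdu /Pair !mulr_fsumr; apply: eq_fsbigr => m _.
  by ring.
rewrite (fsum_exchange (r := flatten [seq [seq (k, m') | k <- enum_mset m'] | m' <- S'])); last first.
  move=> k m'; rewrite !mulf_eq0 !negb_or => /andP [Hfm /andP [_ /andP [Hk0 /N_size Hs]]].
  have Hk : k \in (m' : umon) by move: Hk0; rewrite pnatr_eq0 -lt0n -in_mset.
  have HS2 : m' \in S'.
    by apply: (inS HS'); split => //; rewrite (size_mB Hk) Hs.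
  apply/flattenP; exists [seq (k, m') | k <- enum_mset m'].
    by apply/mapP; exists m'.
  by apply/mapP; exists k.
apply: eq_fsbigr => m' _; rewrite -mulr_fsumr; congr (_ * _).
rewrite (fsum_sup (r := enum_mset m')); last first.
  by move=> k; rewrite mulf_eq0 negb_or => /andP [_ H]; exact: natr_supp H.
by apply: eq_bigr => k _; rewrite coefE mulrCA.
Qed.
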